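(* Let $n_x, d \in \mathbb{Z}^+$, let $\mathsf{X} \in \mathbb{R}^{n_x \times d}$ be arbitrary and let $\gamma_1, \ldots, \gamma_d > 0$. Let $\tilde{\mathsf{K}}_\nabla$ be the $n_x(d+1) \times n_x(d+1)$ modified gradient-enhanced Gaussian kernel matrix defined in the context. Then for every row index $a \in \{1, \ldots, n_x\}$, the sum of the absolute values of the off-diagonal entries of row $a$ of $\tilde{\mathsf{K}}_\nabla$ is at most $$u_{\text{G}}(n_x,d) = (n_x-1) \frac{1 + \sqrt{1 + 4d}}{2} e^{-\frac{1 + 2d - \sqrt{1 + 4d}}{4d}}.$$
   Context: Write $\tilde{x}_{ij} = \gamma_j x_{ij}$ for $1 \le i \le n_x$, $1 \le j \le d$, where $x_{ij}$ is the $(i,j)$ entry of $\mathsf{X}$, and let $\tilde{\mathbf{x}}_{i:} \in \mathbb{R}^d$ be the vector $(\tilde{x}_{i1},\ldots,\tilde{x}_{id})$. Define the $n_x\times n_x$ matrices $\mathsf{K}$ and $\tilde{\mathsf{R}}_j$ ($1\le j\le d$) by $\mathsf{K}_{ab} = \exp\!\left(-\tfrac12 \|\tilde{\mathbf{x}}_{a:} - \tilde{\mathbf{x}}_{b:}\|_2^2\right)$ and $(\tilde{\mathsf{R}}_j)_{ab} = \tilde{x}_{aj} - \tilde{x}_{bj}$. The matrix $\tilde{\mathsf{K}}_\nabla$ is the symmetric block matrix with $(d+1)\times(d+1)$ blocks of size $n_x \times n_x$, indexed by $0,1,\ldots,d$, whose blocks are: block $(0,0)$ is $\mathsf{K}$;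 block $(0,j)$ has entries $(\tilde{\mathsf{R}}_j)_{ab}\mathsf{K}_{ab}$; block $(i,0)$ has entries $-(\tilde{\mathsf{R}}_i)_{ab}\mathsf{K}_{ab}$; block $(i,j)$ for $i,j \ge 1$ has entries $\left(\delta_{ij} - (\tilde{\mathsf{R}}_i)_{ab}(\tilde{\mathsf{R}}_j)_{ab}\right)\mathsf{K}_{ab}$, where $\delta_{ij}$ is the Kronecker delta. (Equivalently, $\tilde{\mathsf{K}}_\nabla = \mathsf{P}^{-1}\mathsf{K}_\nabla\mathsf{P}^{-1}$ where $\mathsf{K}_\nabla$ is the gradient-enhanced Gaussian kernel matrix with kernel $k(\mathbf{x},\mathbf{y}) = e^{-\frac12\sum_i \gamma_i^2(x_i-y_i)^2}$ and $\mathsf{P} = \mathrm{diag}(\mathbf{1}_{n_x}, \gamma_1\mathbf{1}_{n_x},\ldots,\gamma_d\mathbf{1}_{n_x})$.) Rows $1,\ldots,n_x$ are the rows of block-row $0$. *)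

(* Defs.v *)
From mathcomp Require Import all_boot all_order all_algebra.
From mathcomp Require Import all_classical all_reals all_analysis.
Set Implicit Arguments. Unset Strict Implicit. Unset Printing Implicit Defensive.
Import Order.TTheory GRing.Theory Num.Theory.
Local Open Scope ring_scope.

(* Block indices of the gradient-enhanced matrix: 'I_(d.+1); block 0 is the
   function-value block, block j.+1 (j : 'I_d) is the derivative block for
   coordinate j (the paper's j+1).  A row/column of Ktilde is a pair
   (block index, point index) : 'I_(d.+1) * 'I_nx. *)

Section GEK.
Variables (R : realType) (nx d : nat) (X : 'M[R]_(nx, d)) (gamma : 'I_d -> R).

Definition xt (a : 'I_nx) (j : 'I_d) : R := gamma j * X a j.

Definition Kmat (a b : 'I_nx) : R :=
  expR (- (1/2) * \sum_(j < d) (xt a j - xt b j) ^+ 2).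

Definition Rt (j : 'I_d) (a b : 'I_nx) : R := xt a j - xt b j.

Definition Ktilde (p q : 'I_(d.+1) * 'I_nx) : R :=
  let: (i, a) := p in let: (j, b) := q in
  match @fintype.split 1 d i, @fintype.split 1 d j with
  | inl _, inl _ => Kmat a b
  | inl _, inr j' => Rt j' a b * Kmat a b
  | inr i', inl _ => - (Rt i' a b * Kmat a b)
  | inr i', inr j' =>
      ((i' == j')%:R - Rt i' a b * Rt j' a b) * Kmat a b
  end.

End GEK.

Definition uG (R : realType) (nx d : nat) : R :=
  (nx%:R - 1) * ((1 + Num.sqrt (1 + 4 * d%:R)) / 2)
  * expR (- ((1 + 2 * d%:R - Num.sqrt (1 + 4 * d%:R)) / (4 * d%:R))).

(* Main.v *)
Require Import Defs.
From mathcomp Require Import all_boot all_order all_algebra.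
From mathcomp Require Import all_classical all_reals all_analysis.
From mathcomp Require Import ring lra.
Import Order.TTheory GRing.Theory Num.Theory.
Local Open Scope ring_scope.

Lemma key (R : realType) (d : nat) (r : 'I_d -> R) : (0 < d)%N ->
  (1 + \sum_(j < d) `|r j|) * expR (- (1/2) * \sum_(j < d) r j ^+ 2) <=
  ((1 + Num.sqrt (1 + 4 * d%:R)) / 2)
  * expR (- ((1 + 2 * d%:R - Num.sqrt (1 + 4 * d%:R)) / (4 * d%:R))).
Proof.
move=> d0.
set w := Num.sqrt _.
set M := (1 + w) / 2.
set c := (1 + 2 * d%:R - w) / (4 * d%:R).
set s := \sum_(j < d) r j ^+ 2.
set L := \sum_(j < d) `|r j|.
have dpos : (0 : R) < d%:R by rewrite ltr0n.
have w0 : 0 <= w by exact: sqrtr_ge0.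
have w2 : w ^+ 2 = 1 + 4 * d%:R by rewrite sqr_sqrtr // addr_ge0 // mulr_ge0 // ler0n.
have Mpos : 0 < M by rewrite /M; lra.
have Hc : M * (1 - c) - 1 - d%:R / (2 * M) = 0.
  rewrite /M /c.
  have h1 : (1 + w) != 0 by apply/eqP; lra.
  have h2 : (d%:R : R) != 0 by apply/eqP; lra.
  have -> : (1 + w) / 2 * (1 - (1 + 2 * d%:R - w) / (4 * d%:R)) - 1 - d%:R / (2 * ((1 + w) / 2))
     = ((1 + w) ^+ 2 * (2 * d%:R - 1 + w) - 8 * d%:R * (1 + w) - 8 * d%:R ^+ 2) / (8 * d%:R * (1 + w)).
    by field; rewrite h1 h2.
  have -> : (1 + w) ^+ 2 * (2 * d%:R - 1 + w) - 8 * d%:R * (1 + w) - 8 * d%:R ^+ 2 = 0.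
    have e3 : w ^+ 3 = w * (1 + 4 * d%:R) by rewrite exprS w2.
    rewrite !(exprS, expr0) in e3 w2 *. nra.
  by rewrite mul0r.
have HL : 1 + L <= M * (1 + s / 2 - c).
  have : \sum_(j < d) (M / 2 * r j ^+ 2 - `|r j| + 1 / (2 * M)) >= 0.
    apply: sumr_ge0 => j _.
    have -> : M / 2 * r j ^+ 2 - `|r j| + 1 / (2 * M) = (M * `|r j| - 1) ^+ 2 / (2 * M).
      rewrite -[r j ^+ 2]real_normK ?num_real //. field. by apply/eqP; lra.
    apply: divr_ge0; [exact: sqr_ge0 | lra].
  rewrite !big_split /= sumr_const card_ord -mulr_sumr.
  rewrite -/s sumrN -/L.
  have -> : (1 / (2 * M)) *+ d = d%:R / (2 * M) by rewrite -mulr_natl mul1r.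
  move: Hc; set z := d%:R / (2 * M).
  have -> : M * (1 + s / 2 - c) = M + M / 2 * s - M * c by ring.
  have -> : M * (1 - c) = M - M * c by rewrite mulrBr mulr1.
  lra.
have E : expR (- c) = expR (- (1/2) * s) * expR (s / 2 - c).
  rewrite -expRD; congr expR; lra.
rewrite E mulrA [_ * expR (- _ * s)]mulrC -mulrA.
rewrite [X in _ <= X]mulrC -mulrA.
rewrite ler_pM2l ?expR_gt0 //.
apply: (le_trans HL); rewrite [X in _ <= X]mulrC ler_pM2l //.
by rewrite -addrA expR_ge1Dx.
Qed.

Lemma split_ord0 d : @fintype.split 1 d (ord0 : 'I_d.+1) = inl ord0.
Proof. by rewrite split1 unlift_none. Qed.
Lemma split_lift d (j : 'I_d) : @fintype.split 1 d (lift ord0 j : 'I_d.+1) = inr j.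
Proof. by rewrite split1 liftK. Qed.

Theorem proposition1 (R : realType) (nx d : nat) (X : 'M[R]_(nx, d))
    (gamma : 'I_d -> R) :
  (0 < nx)%N -> (0 < d)%N -> (forall j, 0 < gamma j) ->
  forall a : 'I_nx,
    \sum_(q : 'I_(d.+1) * 'I_nx | q != (ord0, a))
        `|Ktilde X gamma (ord0, a) q| <= uG R nx d.
Proof.
move=> nx0 d0 g0 a.
set F := fun q => `|Ktilde X gamma (ord0, a) q|.
have E1 : \sum_(q | q != (ord0, a)) F q = \sum_(b | b != a) \sum_(i < d.+1) F (i, b).
  rewrite exchange_big pair_big_dep /= big_mkcond [RHS]big_mkcond.
  apply: eq_bigr => -[i b] _ /=.
  have [->|ba] := eqVneq b a; last first.
    by rewrite xpair_eqE (negbTE ba) andbF.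
  rewrite xpair_eqE eqxx andbT /=.
  case: (unliftP ord0 i) => [j ->|->]; last by rewrite eqxx.
  rewrite eq_sym (negbTE (neq_lift _ _)) /F /Ktilde split_ord0 split_lift /Rt subrr mul0r normr0.
  by [].
rewrite -/F E1.
set U : R := ((1 + Num.sqrt (1 + 4 * d%:R)) / 2)
  * expR (- ((1 + 2 * d%:R - Num.sqrt (1 + 4 * d%:R)) / (4 * d%:R))).
apply: (@le_trans _ _ (\sum_(b | b != a) U)).
  apply: ler_sum => b ba.
  rewrite big_ord_recl /F /Ktilde split_ord0 /=.
  under eq_bigr => j _ do rewrite split_lift normrM (ger0_norm (ltW (expR_gt0 _))).
  rewrite -mulr_suml ger0_norm ?(ltW (expR_gt0 _)) // -[X in X + _]mul1r -mulrDl.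
  move: (@key R d (fun j => Rt X gamma j a b) d0); rewrite /Kmat /Rt /U. done.
have -> : \sum_(b | b != a) U = U *+ #|predC1 a| by rewrite -sumr_const.
rewrite cardC1 card_ord /uG -/U -mulr_natl -mulrA -/U.
rewrite mulr1 -mulr_natl.
have -> : nx%:R = (nx.-1)%:R + 1 :> R by rewrite natr1 prednK.
rewrite mulr1 addrK mulr_natl; exact: lexx.
Qed.
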